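(* Let $n\ge 1$, $L>0$, and let $f:[0,1]^n\to\mathbb{R}$ satisfy $|f(x)-f(y)|\le L\|x-y\|$ for all $x,y\in[0,1]^n$. Run the algorithm described in the context on $f$, producing queried centers $x_t$, edge vectors $v_t$ and values $f_t=f(P(x_t))$. Then for every $t\ge 2$, $$f_t-\min_{x\in[0,1]^n}f(x)\le (1+\theta)L\|v_t\|,$$ where $\theta=2^{1/n}$.
   Context: Notation: $\|\cdot\|$ is the Euclidean norm; $\Omega=[0,1]^n$; $\theta=2^{1/n}$; $P:\mathbb{R}^n\to\Omega$ is the Euclidean projection onto $\Omega$ (coordinatewise clipping to $[0,1]$); $e_i$ is the $i$-th standard basis vector and $v(i)$ the $i$-th coordinate of $v$. For a center $x\in\mathbb{R}^n$ and edge vector $v\in(0,\infty)^n$, $H(x,v)=\prod_{i=1}^n[x(i)-v(i),\,x(i)+v(i)]$. The algorithm maintains a list of candidates, each a triple (center $x$, edge vector $v$, score $s$). Splitting rule: given an evaluated point $x_a$ with edge vector $v_a$ and value $f_a$, let $I$ be an index maximizing $v_a(i)$ over $i\in\{1,\dots,n\}$ (ties broken by smallest index), let $z=\tfrac{v_a(I)}{2}e_I$, and add to the list the two candidates $(x_a+z,\ v_a-z,\ f_a-L\|v_a\|)$ and $(x_a-z,\ v_a-z,\ f_a-L\|v_a\|)$. Initialization: $x_1=v_1=(\theta^{-1},\theta^{-2},\dots,\theta^{-n})$, $f_1=f(P(x_1))$, and apply the splitting rule to $(x_1,v_1,f_1)$. For each $t\ge 2$: remove from the list a candidate with the smallest score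 (ties arbitrary), call its center $x_t$ and edge vector $v_t$, evaluate $f_t=f(P(x_t))$, and apply the splitting rule to $(x_t,v_t,f_t)$. *)

(* Defs.v *)
From mathcomp Require Import all_boot all_order all_algebra.
From mathcomp Require Import all_classical all_reals all_analysis.
Set Implicit Arguments. Unset Strict Implicit. Unset Printing Implicit Defensive.
Import Order.TTheory GRing.Theory Num.Theory.
Local Open Scope ring_scope.

Section Defs.
Variables (R : realType) (n : nat).

Definition vec := 'I_n -> R.

Definition enorm (v : vec) : R := Num.sqrt (\sum_(i < n) v i ^+ 2).

Definition vadd (x y : vec) : vec := fun i => x i + y i.
Definition vsub (x y : vec) : vec := fun i => x i - y i.

Definition inOmega (x : vec) : Prop := forall i, 0 <= x i <= 1.

(* Euclidean projection onto Omega: coordinatewise clipping *)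
Definition proj (x : vec) : vec := fun i => Num.min 1 (Num.max 0 (x i)).

Definition theta : R := powR 2 (n%:R^-1).

Definition init_vec : vec := fun i => theta ^- (i.+1).

Definition split_index (v : vec) (I : 'I_n) : Prop :=
  (forall j : 'I_n, v j <= v I) /\ (forall j : 'I_n, (j < I)%N -> v j < v I).

(* candidates: (center, edge vector, score) *)
Definition cand := (vec * vec * R)%type.

Definition zvec (v : vec) (I : 'I_n) : vec :=
  fun i => if i == I then v I / 2 else 0.

Definition split_cands (L : R) (I : 'I_n) (xa va : vec) (fa : R) : seq cand :=
  [:: (vadd xa (zvec va I), vsub va (zvec va I), fa - L * enorm va);
      (vsub xa (zvec va I), vsub va (zvec va I), fa - L * enorm va)].

(* (x, v, fv, C) is a run of the algorithm on f with constant L; C t is the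
   candidate list after step t (indices t >= 1). Ties in the minimal score are
   arbitrary, so any valid choice is allowed. *)
Definition is_run (L : R) (f : vec -> R) (x v : nat -> vec) (fv : nat -> R)
    (C : nat -> seq cand) : Prop :=
  [/\ x 1%N = init_vec, v 1%N = init_vec,
      (forall t, (1 <= t)%N -> fv t = f (proj (x t))),
      (exists I, split_index (v 1%N) I /\
                 C 1%N = split_cands L I (x 1%N) (v 1%N) (fv 1%N)) &
      (forall t, (2 <= t)%N ->
         exists (l1 l2 : seq cand) (s : R) (I : 'I_n),
           [/\ C t.-1 = l1 ++ (x t, v t, s) :: l2,
               all (fun c : cand => s <= c.2) (C t.-1),
               split_index (v t) I &
               C t = l1 ++ l2 ++ split_cands L I (x t) (v t) (fv t)])].

End Defs.

(* Main.v *)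
Require Import Defs.
From mathcomp Require Import all_boot all_order all_algebra.
From mathcomp Require Import all_classical all_reals all_analysis.
From mathcomp Require Import zify ring lra.
From Stdlib Require List.
Import Order.TTheory GRing.Theory Num.Theory.
Local Open Scope ring_scope.

Section Aux.
Variables (R : realType) (n : nat).

Lemma enorm_le (a b : vec R n) : (forall i, `|a i| <= b i) -> enorm a <= enorm b.
Proof.
move=> H; rewrite /enorm; apply: ler_wsqrtr; apply: ler_sum => i _.
have h0 : 0 <= `|a i| := normr_ge0 _.
have h1 := H i.
rewrite -real_normK ?num_real //; nra.
Qed.

Lemma clip_cases (a : R) :
  (Num.min 1 (Num.max 0 a) = a /\ 0 <= a /\ a <= 1) \/
  (Num.min 1 (Num.max 0 a) = 0 /\ a <= 0) \/
  (Num.min 1 (Num.max 0 a) = 1 /\ 1 <= a).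
Proof.
rewrite /Num.max /Num.min; case: (ltrP 0 a) => h0; case: ltrP => h1;
first [left; split; [done|lra] | right; left; split; [done|lra] | right; right; split; [done|lra]].
Qed.

Lemma abs_le (A B : R) : - `|B| <= A -> A <= `|B| -> `|A| <= `|B|.
Proof. by move=> h1 h2; rewrite ler_norml h1 h2. Qed.

Lemma clip_lip (a b : R) :
  `|Num.min 1 (Num.max 0 a) - Num.min 1 (Num.max 0 b)| <= `|a - b|.
Proof.
have hB := ler_norm (a - b); have hB' := ler_norm (- (a - b)); rewrite normrN in hB'.
case: (clip_cases a) => [[-> ha]|[[-> ha]|[-> ha]]];
case: (clip_cases b) => [[-> hb]|[[-> hb]|[-> hb]]]; apply: abs_le; lra.
Qed.

Lemma clip_id (a : R) : 0 <= a <= 1 -> Num.min 1 (Num.max 0 a) = a.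
Proof.
case/andP=> h0 h1.
case: (clip_cases a) => [[-> ha]|[[-> ha]|[-> ha]]]; lra.
Qed.

Lemma proj_omega (a : vec R n) : inOmega (Defs.proj a).
Proof.
move=> i; rewrite /Defs.proj.
case: (clip_cases (a i)) => [[-> ha]|[[-> ha]|[-> ha]]]; apply/andP; lra.
Qed.

Lemma proj_lip (a b : vec R n) i : `|Defs.proj a i - Defs.proj b i| <= `|a i - b i|.
Proof. exact: clip_lip. Qed.

Lemma proj_lip_omega (a y : vec R n) i : inOmega y ->
  `|Defs.proj a i - y i| <= `|a i - y i|.
Proof.
move=> hy; have := proj_lip a y i; by rewrite /Defs.proj (@clip_id (y i) (hy i)).
Qed.

Lemma theta_ge0 : 0 <= theta R n.
Proof. exact: powR_ge0. Qed.

Lemma thetan : (0 < n)%N -> theta R n ^+ n = 2.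
Proof.
move=> hn; rewrite /theta -powR_mulrn ?powR_ge0 // -powRrM mulVf ?powRr1 //.
by rewrite pnatr_eq0; lia.
Qed.

Lemma theta_gt1 : (0 < n)%N -> 1 < theta R n.
Proof.
move=> hn; rewrite ltNge; apply/negP => h.
have := exprn_ile1 n theta_ge0 h; rewrite thetan //; lra.
Qed.

Definition sstruct (v : vec R n) := exists (c : R) (g : 'I_n -> 'I_n),
  [/\ 0 < c, injective g & forall i, v i = c * theta R n ^- g i].

Lemma struct_norm (v : vec R n) c (g : 'I_n -> 'I_n) : 0 <= c -> injective g ->
  (forall i, v i = c * theta R n ^- g i) ->
  enorm v = c * enorm (fun i : 'I_n => theta R n ^- i).
Proof.
move=> hc hg hv; rewrite /enorm.
under eq_bigr => i _ do rewrite hv exprMn.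
rewrite -mulr_sumr sqrtrM ?sqr_ge0 // sqrtr_sqr ger0_norm //.
by congr (_ * Num.sqrt _); rewrite [RHS](reindex_inj hg).
Qed.

Lemma split_struct (va : vec R n) I : (0 < n)%N -> sstruct va -> split_index va I ->
  [/\ sstruct (vsub va (zvec va I)),
      enorm va = theta R n * enorm (vsub va (zvec va I)) &
      (forall i, 0 < va i)].
Proof.
move=> hn [c [g [hc hg hv]]] [hmax _].
have th1 : 1 < theta R n := theta_gt1 hn.
have th0 : 0 < theta R n by lra.
have hpos : forall i, 0 < va i.
  by move=> i; rewrite hv mulr_gt0 // invr_gt0 exprn_gt0.
have hgI : (g I : nat) = 0%N.
  apply/eqP; rewrite -leqn0 leqNgt; apply/negP => hgt.
  pose j0 := invF hg (Ordinal hn).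
  have hj0 : g j0 = Ordinal hn by rewrite /j0 f_invF.
  have h1 : 1 < theta R n ^+ g I by rewrite exprn_egt1 // -lt0n.
  have h2 : (theta R n ^+ g I)^-1 < 1 by rewrite invf_lt1 // exprn_gt0.
  have := hmax j0; rewrite !hv hj0 /= expr0 invr1 mulr1.
  move=> h3; have h4 : 0 < c * (1 - (theta R n ^+ g I)^-1) by apply: mulr_gt0 => //; rewrite subr_gt0.
  rewrite mulrBr mulr1 in h4; move: h3 h4; rewrite -subr_ge0 => h3 h4.
  have h5 := ltr_leD h4 h3; by rewrite addr0 addrC addrA subrK subrr ltxx in h5.
have hgi : forall i, i != I -> (0 < g i)%N.
  move=> i hi; rewrite lt0n; apply/negP => /eqP h0; move/negP: hi; apply; apply/eqP.
  by apply: hg; apply: val_inj; rewrite /= h0 hgI.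
have hn1 : (n.-1 < n)%N by lia.
pose g' := fun i : 'I_n => if i == I then Ordinal hn1
  else Ordinal (leq_ltn_trans (leq_pred (g i)) (ltn_ord (g i))).
have hg' : injective g'.
  move=> i j; rewrite /g'; case: (i =P I) => [->|hi]; case: (j =P I) => [->|hj] //
    /(congr1 val) /= h.
  - have hj' : j != I by apply/eqP.
    have := hgi j hj'; have := ltn_ord (g j); lia.
  - have hi' : i != I by apply/eqP.
    have := hgi i hi'; have := ltn_ord (g i); lia.
  - have hj' : j != I by apply/eqP.
    have hi' : i != I by apply/eqP.
    apply: hg; apply: val_inj => /=; have := hgi i hi'; have := hgi j hj'; lia.
have hvc : forall i, vsub va (zvec va I) i = (c / theta R n) * theta R n ^- g' i.
  move=> i; rewrite /vsub /zvec /g'; case: (i =P I) => [->|hi] /=.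
  - rewrite hv hgI expr0 invr1 mulr1 -mulrA -invfM -exprS prednK // thetan //.
    lra.
  - have hi' : i != I by apply/eqP.
    rewrite subr0 hv -mulrA -invfM -exprS prednK //; exact: hgi.
split => //.
- exists (c / theta R n), g'; split => //; exact: divr_gt0.
- rewrite (struct_norm _ _ _ (ltW hc) hg hv) (struct_norm _ _ _ _ hg' hvc); last exact: divr_ge0 (ltW hc) (ltW th0).
  by field; apply/eqP; lra.
Qed.

Definition inBox (y x v : vec R n) := forall i, `|y i - x i| <= v i.

Definition cinv (L : R) (f : vec R n -> R) (c : cand R n) :=
  [/\ (forall y, inOmega y -> inBox y c.1.1 c.1.2 -> c.2 <= f y),
      f (Defs.proj c.1.1) - c.2 <= (1 + theta R n) * L * enorm c.1.2 &
      sstruct c.1.2].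

Lemma cand_ok L f xa va fa I xc : (0 < n)%N -> 0 < L ->
  (forall y z : vec R n, inOmega y -> inOmega z -> `|f y - f z| <= L * enorm (vsub y z)) ->
  sstruct va -> split_index va I -> fa = f (Defs.proj xa) ->
  (forall i, `|xc i - xa i| <= zvec va I i) ->
  cinv L f (xc, vsub va (zvec va I), fa - L * enorm va).
Proof.
move=> hn hL hlip hs hI hfa hxc.
case: (split_struct va I hn hs hI) => hs' hnorm hpos.
have hz : forall i, 0 <= zvec va I i /\ zvec va I i <= vsub va (zvec va I) i /\
    vsub va (zvec va I) i = va i - zvec va I i.
  move=> i; rewrite /vsub /zvec; case: (i =P I) => [->|_]; have := hpos I; have := hpos i; lra.
split => //=.
- move=> y hy hb.
  have hb' : forall i, `|vsub (Defs.proj xa) y i| <= va i.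
    move=> i; rewrite /vsub; have h0 := proj_lip_omega xa y i hy.
    suff : `|xa i - y i| <= va i by lra.
    have := hb i; have := hxc i; have := hz i; rewrite !ler_norml.
    move=> [h1 [h2 h3]] /andP[h4 h5] /andP[h6 h7]; apply/andP; lra.
  have h1 := enorm_le _ _ hb'.
  have h2 := hlip _ _ (proj_omega xa) hy.
  have h3 := ler_norm (f (Defs.proj xa) - f y).
  have h4 : L * enorm (vsub (Defs.proj xa) y) <= L * enorm va by apply: ler_wpM2l => //; apply: ltW.
  rewrite hfa; lra.
- have hb' : forall i, `|vsub (Defs.proj xc) (Defs.proj xa) i| <= vsub va (zvec va I) i.
    move=> i; rewrite /vsub; have h0 := proj_lip xc xa i.
    have := hxc i; have := hz i; rewrite /vsub; lra.
  have h1 := enorm_le _ _ hb'.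
  have h2 := hlip _ _ (proj_omega xc) (proj_omega xa).
  have h3 := ler_norm (f (Defs.proj xc) - f (Defs.proj xa)).
  have h4 : L * enorm (vsub (Defs.proj xc) (Defs.proj xa)) <= L * enorm (vsub va (zvec va I))
    by apply: ler_wpM2l => //; apply: ltW.
  rewrite hnorm hfa.
  have -> : (1 + theta R n) * L * enorm (vsub va (zvec va I)) =
    L * enorm (vsub va (zvec va I)) + L * (theta R n * enorm (vsub va (zvec va I))) by ring.
  lra.
Qed.

Lemma split_ok L f xa va fa I : (0 < n)%N -> 0 < L ->
  (forall y z : vec R n, inOmega y -> inOmega z -> `|f y - f z| <= L * enorm (vsub y z)) ->
  sstruct va -> split_index va I -> fa = f (Defs.proj xa) ->
  (forall c, List.In c (split_cands L I xa va fa) -> cinv L f c) /\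
  (forall y, inBox y xa va -> exists c, List.In c (split_cands L I xa va fa) /\ inBox y c.1.1 c.1.2).
Proof.
move=> hn hL hlip hs hI hfa.
case: (split_struct va I hn hs hI) => hs' hnorm hpos.
have hz : forall i, 0 <= zvec va I i.
  move=> i; rewrite /zvec; case: (i =P I) => [_|_]; have := hpos I; lra.
split.
- rewrite /split_cands /= => c [<-|[<-|[]]]; apply: (cand_ok L f xa va fa I _ hn hL hlip hs hI hfa) => i.
  + have -> : vadd xa (zvec va I) i - xa i = zvec va I i by rewrite /vadd; ring.
    by rewrite ger0_norm.
  + have -> : vsub xa (zvec va I) i - xa i = - zvec va I i by rewrite /vsub; ring.
    by rewrite normrN ger0_norm.
- move=> y hb; case: (lerP (xa I) (y I)) => hyI.
  + exists (vadd xa (zvec va I), vsub va (zvec va I), fa - L * enorm va); split; first by left.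
    move=> i /=; have hbi := hb i; have hbI := hb I; have hpI := hpos I.
    rewrite /vadd /vsub /zvec; case: (i =P I) => [hi|_].
    * subst i; rewrite ler_norml in hbI; case/andP: hbI => h1 h2; rewrite ler_norml; apply/andP; lra.
    * by rewrite addr0 subr0.
  + exists (vsub xa (zvec va I), vsub va (zvec va I), fa - L * enorm va); split; first by right; left.
    move=> i /=; have hbi := hb i; have hbI := hb I; have hpI := hpos I.
    rewrite /vsub /zvec; case: (i =P I) => [hi|_].
    * subst i; rewrite ler_norml in hbI; case/andP: hbI => h1 h2; rewrite ler_norml; apply/andP; lra.
    * by rewrite !subr0.
Qed.

Lemma sstruct_init : (0 < n)%N -> sstruct (@init_vec R n).
Proof.
move=> hn; have th1 := theta_gt1 hn.
exists (theta R n)^-1, id; split => //.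
- rewrite invr_gt0; lra.
- by move=> i; rewrite /init_vec exprS invfM.
Qed.

Lemma init_box y : (0 < n)%N -> inOmega y -> inBox y (@init_vec R n) (@init_vec R n).
Proof.
move=> hn hy i; have th1 := theta_gt1 hn.
rewrite /init_vec.
have hp : theta R n ^+ i.+1 <= 2.
  rewrite -(thetan hn); apply: ler_weXn2l; [lra | exact: ltn_ord].
have hp0 : 0 < theta R n ^+ i.+1 by apply: exprn_gt0; lra.
have hq : (theta R n ^+ i.+1)^-1 * theta R n ^+ i.+1 = 1 by rewrite mulVf //; lra.
have hq0 : 0 < (theta R n ^+ i.+1)^-1 by rewrite invr_gt0.
case/andP: (hy i) => hy0 hy1.
rewrite ler_norml; apply/andP; split; nra.
Qed.

Lemma all_In (T : Type) (p : pred T) (l : seq T) c : all p l -> List.In c l -> p c.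
Proof. by elim: l => //= a l IH /andP[h1 h2] [<-|h] //; apply: IH. Qed.

End Aux.
Arguments cinv {R n}.
Arguments sstruct {R n}.
Arguments inBox {R n}.

Theorem lemma2 (R : realType) (n : nat) (L : R) (f : vec R n -> R)
    (x v : nat -> vec R n) (fv : nat -> R) (C : nat -> seq (cand R n)) :
  (0 < n)%N -> 0 < L ->
  (forall y z : vec R n, inOmega y -> inOmega z ->
     `|f y - f z| <= L * enorm (vsub y z)) ->
  is_run L f x v fv C ->
  forall t : nat, (2 <= t)%N ->
  forall y : vec R n, inOmega y ->
    fv t - f y <= (1 + theta R n) * L * enorm (v t).
Proof.
move=> hn hL hlip [hx1 hv1 hfv [I1 [hI1 hC1]] hstep].
have key : forall t, (1 <= t)%N ->
  (forall c, List.In c (C t) -> cinv L f c) /\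
  (forall y, inOmega y -> exists c, List.In c (C t) /\ inBox y c.1.1 c.1.2).
  elim=> [//|t IH] _.
  case: t IH => [|t] IH.
  - have hs1 : sstruct (v 1%N) by rewrite hv1; exact: sstruct_init.
    have [h1 h2] := @split_ok R n L f (x 1%N) (v 1%N) (fv 1%N) I1 hn hL hlip hs1 hI1 (hfv 1%N isT).
    rewrite hC1; split => //.
    move=> y hy; apply: h2; rewrite hx1 hv1; exact: init_box.
  - have [IHa IHb] := IH isT.
    have [l1 [l2 [s [I [hCt hall hIt hCt']]]]] := hstep t.+2 isT.
    rewrite /= in hCt hall.
    have hin0 : List.In (x t.+2, v t.+2, s) (C t.+1).
      by rewrite hCt; apply: List.in_or_app; right; left.
    have [_ _ hs] := IHa _ hin0.
    have [h1 h2] := @split_ok R n L f (x t.+2) (v t.+2) (fv t.+2) I hn hL hlip hs hIt (hfv t.+2 isT).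
    rewrite hCt'; split.
    + move=> c hc0; case: (List.in_app_or _ _ _ hc0) => [hc|hc1];
        last case: (List.in_app_or _ _ _ hc1) => [hc|hc]; last exact: h1.
      * by apply: IHa; rewrite hCt; apply: List.in_or_app; left.
      * by apply: IHa; rewrite hCt; apply: List.in_or_app; right; right.
    + move=> y hy; have [c [hc hb]] := IHb y hy.
      move: hc; rewrite hCt => hc0; case: (List.in_app_or _ _ _ hc0) => [hc|[hc|hc]].
      * by exists c; split => //; apply: List.in_or_app; left.
      * subst c; have [c' [hc' hb']] := h2 y hb.
        exists c'; split => //; apply: List.in_or_app; right; apply: List.in_or_app; by right.
      * exists c; split => //; apply: List.in_or_app; right; apply: List.in_or_app; by left.
move=> t ht y hy.
have [ka kb] := key t.-1 ltac:(lia).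
have [l1 [l2 [s [I [hCt hall hIt _]]]]] := hstep t ht.
have hin0 : List.In (x t, v t, s) (C t.-1).
  by rewrite hCt; apply: List.in_or_app; right; left.
have [_ hB _] := ka _ hin0.
have [c [hc hb]] := kb y hy.
have [hA _ _] := ka _ hc.
have h1 := hA y hy hb.
have h2 : s <= c.2 := all_In _ _ _ _ hall hc.
rewrite (hfv t ltac:(lia)); simpl in hB; lra.
Qed.
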